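(* There is no Lie algebra homomorphism $s:L_1\to\Lambda_1(\mathbb{Q}\mathrm{Par})^+$ with $\varepsilon_2\circ s=\mathrm{id}_{L_1}$ such that $s$ maps $\mathbb{Q}x^m\frac{d}{dx}$ into $\mathbb{Q}\mathrm{Par}((m))$ for each $m\ge2$. In other words, the augmentation homomorphism $\varepsilon_2:\Lambda_1(\mathbb{Q}\mathrm{Par})^+\to L_1$ has no such splitting.
   Context: The nonsymmetric operad of partitions $\mathrm{Par}$: $\mathrm{Par}((1))=\{1\}$, and for $m\ge2$, $\mathrm{Par}((m))$ is the set of monomials $\prod_{i=1}^Nx_i^{a_i}$ with $N\ge2$, all $a_i\ge1$, $\sum a_i=m$. Partial composition: if $a_1+\dots+a_{l-1}+1\le s\le a_1+\dots+a_l$, then $\left(\prod_{i=1}^Nx_i^{a_i}\right)\circ_s\left(\prod_{k=1}^{N_s}x_k^{b_k}\right)=x_l^{a_l-1+\sum_kb_k}\prod_{i\ne l}x_i^{a_i}$; $1$ is a two-sided unit. $\Lambda_1(\mathbb{Q}\mathrm{Par})=\bigoplus_{m\ge2}\mathbb{Q}\mathrm{Par}((m))$ with Lie bracket $[c,d]=\sum_{t=1}^{j}d\circ_tc-\sum_{s=1}^{k}c\circ_sd$ for $c\in\mathrm{Par}((k))$, $d\in\mathrm{Par}((j))$. The involution $\iota$ of $\Lambda_1(\mathbb{Q}\mathrm{Par})$ is the linear map with $\iota(x_1^{a_1}x_2^{a_2}\cdots x_n^{a_n})=x_1^{a_n}x_2^{a_{n-1}}\cdots x_n^{a_1}$; it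 is a Lie algebra automorphism, and $\Lambda_1(\mathbb{Q}\mathrm{Par})^+=\{u:\iota(u)=u\}$ is a Lie subalgebra. $L_1=x^2\mathbb{Q}[x]\frac{d}{dx}$, and $\varepsilon_2$ is the restriction to $\Lambda_1(\mathbb{Q}\mathrm{Par})^+$ of the augmentation homomorphism, which sends every monomial in $\mathrm{Par}((m))$ to $x^m\frac{d}{dx}$. *)

(* Defs.v *)
From HB Require Import structures.
From mathcomp Require Import all_boot all_algebra.
From mathcomp Require Import finmap.
From mathcomp Require Import monalg.
Set Implicit Arguments. Unset Strict Implicit. Unset Printing Implicit Defensive.
Import GRing.Theory.
Local Open Scope ring_scope.

(* A monomial x_1^{a_1} ... x_N^{a_N} of Par((m)), m >= 2, is encoded by the
   sequence [:: a_1; ...; a_N] with N >= 2, all a_i >= 1; its arity m is sumn. *)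
Definition is_par (c : seq nat) : bool :=
  (2 <= size c)%N && all (fun a => 0 < a)%N c.

Definition arity (c : seq nat) : nat := sumn c.

Notation QPar := {malg rat[seq nat]}.

Definition inLambda (u : QPar) : bool := all is_par (msupp u).

Definition homog (m : nat) (u : QPar) : bool :=
  all (fun c => is_par c && (arity c == m)) (msupp u).

(* partial composition c o_s d, which (by the defining formula) only depends on
   the arity j = sum b_k of d: if a_1+..+a_{l-1}+1 <= s <= a_1+..+a_l then
   a_l is replaced by a_l - 1 + j.  s is 1-indexed. *)
Fixpoint ins (c : seq nat) (s j : nat) : seq nat :=
  match c with
  | [::] => [::]
  | a :: c' => if (s <= a)%N then (a - 1 + j)%N :: c' else a :: ins c' (s - a) j
  end.

Definition pcomp (c : seq nat) (s : nat) (d : seq nat) : seq nat :=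
  ins c s (arity d).

Definition brk (c d : seq nat) : QPar :=
  \sum_(1 <= t < (arity d).+1) << pcomp d t c >>
  - \sum_(1 <= s < (arity c).+1) << pcomp c s d >>.

Definition lie (u v : QPar) : QPar :=
  \sum_(c <- msupp u) \sum_(d <- msupp v) (u@_c * v@_d) *: brk c d.

Definition iota_inv (u : QPar) : QPar :=
  \sum_(c <- msupp u) u@_c *: << rev c >>.

Definition inLambdaPlus (u : QPar) : Prop := inLambda u /\ iota_inv u = u.

(* L_1 = x^2 Q[x] d/dx, the vector field p(x) d/dx encoded by p. *)
Definition inL1 (p : {poly rat}) : Prop := p`_0 = 0 /\ p`_1 = 0.

(* [f d/dx, g d/dx] = (f g' - g f') d/dx *)
Definition lieL1 (p q : {poly rat}) : {poly rat} := p * q^`() - q * p^`().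

Definition aug (u : QPar) : {poly rat} :=
  \sum_(c <- msupp u) u@_c *: 'X^(arity c).

(* Main.v *)
Require Import Defs.
From HB Require Import structures.
From mathcomp Require Import all_boot all_algebra.
From mathcomp Require Import finmap.
From mathcomp Require Import monalg.
From mathcomp Require Import lra.
Import GRing.Theory.
Local Open Scope ring_scope.

Fixpoint comps (n m : nat) : seq (seq nat) := match n with 0 => if m == 0%N then [:: [::]] else [::] | n'.+1 => if m == 0%N then [:: [::]] else flatten [seq map (cons i) (comps n' (m - i)) | i <- iota 1 m] end.
Definition parD m := [seq c <- comps m m | (2 <= size c)%N].

Lemma comps_complete (c : seq nat) n : all (fun a => 0 < a)%N c -> (size c <= n)%N -> c \in comps n (sumn c).
Proof.
elim: c n => [|a c IH] [|n] //=.
move=> /andP[a0 ac] sz.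
have -> : (a + sumn c == 0)%N = false by case: a a0.
apply/flatten_mapP; exists a.
  by rewrite mem_iota a0 /= add1n ltnS leq_addr.
by rewrite addKn map_f // IH.
Qed.

Lemma size_sumn (c : seq nat) : all (fun a => 0 < a)%N c -> (size c <= sumn c)%N.
Proof. by elim: c => //= a c IH /andP[a0 /IH h]; rewrite -add1n leq_add. Qed.

Lemma homog_sub m u : homog m u -> {subset msupp u <= parD m}.
Proof.
move=> /allP H c /H /andP[/andP[s2 pos] /eqP <-].
by rewrite mem_filter s2 /arity comps_complete // size_sumn.
Qed.

Lemma sum_incl (V : zmodType) (u : QPar) (D : seq (seq nat)) (F : seq nat -> rat -> V) :
 uniq D -> {subset msupp u <= D} -> (forall c, F c 0 = 0) ->
 \sum_(c <- msupp u) F c u@_c = \sum_(c <- D) F c u@_c.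
Proof.
move=> uD sub F0.
symmetry; rewrite (bigID (fun c => c \in msupp u)) /= [X in _ + X]big1 ?addr0; last first.
  by move=> c /mcoeff_outdom ->.
rewrite -big_filter; apply: perm_big; apply: uniq_perm.
- exact: filter_uniq.
- exact: fset_uniq.
by move=> c; rewrite mem_filter; case: (boolP (c \in msupp u)) => // /sub ->.
Qed.

Lemma mcoeff_sum (I : Type) (r : seq I) (F : I -> QPar) k :
  (\sum_(i <- r) F i)@_k = \sum_(i <- r) (F i)@_k.
Proof. elim: r => [|i r IH]; by rewrite ?big_nil ?mcoeff0 // !big_cons mcoeffD IH. Qed.

Definition bc (c d k : seq nat) : rat :=
  (count (fun t => Defs.pcomp d t c == k) (iota 1 (arity d)))%:R
  - (count (fun t => Defs.pcomp c t d == k) (iota 1 (arity c)))%:R.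

Lemma brk_coef c d k : (brk c d)@_k = bc c d k.
Proof.
rewrite /brk /bc mcoeffB !mcoeff_sum /=.
rewrite /index_iota !subn1 /=.
rewrite -!sum1_count !natr_sum ; congr (_ - _); rewrite [RHS]big_mkcond /=; apply: eq_bigr => i _; by rewrite mcoeffU; case: (_ == _).
Qed.

Lemma lie_coef (u v : QPar) D1 D2 k : uniq D1 -> uniq D2 ->
  {subset msupp u <= D1} -> {subset msupp v <= D2} ->
  (lie u v)@_k = \sum_(c <- D1) \sum_(d <- D2) u@_c * v@_d * bc c d k.
Proof.
move=> u1 u2 s1 s2.
rewrite /lie mcoeff_sum /=.
transitivity (\sum_(c <- msupp u) \sum_(d <- msupp v) u@_c * v@_d * bc c d k).
  apply: eq_bigr => c _; rewrite mcoeff_sum; apply: eq_bigr => d _.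
  by rewrite mcoeffZ brk_coef.
rewrite (@sum_incl _ u D1 (fun c x => \sum_(d <- msupp v) x * v@_d * bc c d k)) //; last first.
  by move=> c; apply: big1 => d _; rewrite !mul0r.
apply: eq_bigr => c _.
rewrite (@sum_incl _ v D2 (fun d y => u@_c * y * bc c d k)) //.
by move=> d; rewrite mulr0 mul0r.
Qed.

Lemma aug_incl (u : QPar) D : uniq D -> {subset msupp u <= D} ->
  aug u = \sum_(c <- D) u@_c *: 'X^(arity c).
Proof.
move=> uD sD; rewrite /aug (@sum_incl _ u D (fun c x => x *: 'X^(arity c))) //.
by move=> c; rewrite scale0r.
Qed.

Lemma iota_coef (u : QPar) D k : uniq D -> {subset msupp u <= D} ->
  (iota_inv u)@_k = \sum_(c <- D) u@_c * (rev c == k)%:R.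
Proof.
move=> uD sD; rewrite /iota_inv mcoeff_sum /=.
transitivity (\sum_(c <- msupp u) u@_c * (rev c == k)%:R).
  apply: eq_bigr => c _; rewrite mcoeffZ mcoeffU; by case: (_ == _); rewrite ?mulr1n ?mulr0n.
rewrite (@sum_incl _ u D (fun c x => x * (rev c == k)%:R)) //.
by move=> c; rewrite mul0r.
Qed.

Lemma P2 : parD 2 = [:: [:: 1%N; 1%N]]. Proof. by []. Qed.
Lemma P3 : parD 3 = [:: [:: 1%N; 1%N; 1%N]; [:: 1%N; 2%N]; [:: 2%N; 1%N]]. Proof. by []. Qed.
Lemma P4 : parD 4 = [:: [:: 1%N; 1%N; 1%N; 1%N]; [:: 1%N; 1%N; 2%N]; [::
            1%N; 2%N; 1%N]; [:: 1%N; 3%N]; [:: 2%N; 1%N; 1%N]; [::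
            2%N; 2%N]; [:: 3%N; 1%N]]. Proof. by []. Qed.
Lemma P5 : parD 5 = [:: [:: 1%N; 1%N; 1%N; 1%N; 1%N]; [:: 1%N; 1%N; 1%N; 2%N];
            [:: 1%N; 1%N; 2%N; 1%N]; [:: 1%N; 1%N; 3%N];
            [:: 1%N; 2%N; 1%N; 1%N]; [:: 1%N; 2%N; 2%N]; [::
            1%N; 3%N; 1%N]; [:: 1%N; 4%N]; [:: 2%N; 1%N; 1%N; 1%N];
            [:: 2%N; 1%N; 2%N]; [:: 2%N; 2%N; 1%N]; [::
            2%N; 3%N]; [:: 3%N; 1%N; 1%N]; [:: 3%N; 2%N]; [::
            4%N; 1%N]]. Proof. by []. Qed.

Lemma inX m : (2 <= m)%N -> inL1 'X^m.
Proof. by move=> m2; rewrite /inL1 !coefXn; case: m m2 => [|[|m]]. Qed.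

Lemma inL1_0 : inL1 0.
Proof. by split; rewrite coef0. Qed.

Lemma lieXX (j k : nat) : lieL1 'X^(j.+1) 'X^(k.+1) = 'X^((j + k).+1) *+ k.+1 - 'X^((j + k).+1) *+ j.+1 :> {poly rat}.
Proof.
rewrite /lieL1 !derivXn /= !mulrnAr -!exprD.
by rewrite addSn addnC addSn addnC.
Qed.

Theorem proposition7p2 :
  ~ exists s : {poly rat} -> {malg rat[seq nat]},
    [/\ (forall (a : rat) (p q : {poly rat}), inL1 p -> inL1 q ->
           s (a *: p + q) = a *: s p + s q),
        (forall p, inL1 p -> inLambdaPlus (s p)),
        (forall p q, inL1 p -> inL1 q -> s (lieL1 p q) = lie (s p) (s q)),
        (forall p, inL1 p -> aug (s p) = p)
      & (forall m : nat, (2 <= m)%N -> homog m (s 'X^m))].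
Proof.
move=> [s [Hlin Hplus Hlie Haug Hhom]].
have s0 : s 0 = 0.
  have := Hlin 1 0 0 inL1_0 inL1_0; rewrite scale1r addr0 => /(congr1 (fun y => y - s 0)).
  by rewrite addrK subrr scale1r => <-.
have sZ a p : inL1 p -> s (a *: p) = a *: s p.
  by move=> hp; have := Hlin a p 0 hp inL1_0; rewrite !addr0 s0 addr0.
have sub m : (2 <= m)%N -> {subset msupp (s 'X^m) <= parD m}.
  by move=> m2; apply: homog_sub; apply: Hhom.
have R4 : s 'X^4 = lie (s 'X^2) (s 'X^3).
  rewrite -Hlie; try exact: inX; congr (s _); rewrite (lieXX 1 2) /=.
  by rewrite -mulrnBr.
have R5 : 2%:R *: s 'X^5 = lie (s 'X^2) (s 'X^4).
  rewrite -Hlie; try exact: inX; rewrite -sZ; try exact: inX; congr (s _); rewrite (lieXX 1 3) /=.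
  by rewrite scaler_nat -mulrnBr.
have R6 : 3%:R *: s 'X^6 = lie (s 'X^2) (s 'X^5).
  rewrite -Hlie; try exact: inX; rewrite -sZ; try exact: inX; congr (s _); rewrite (lieXX 1 4) /=.
  by rewrite scaler_nat -mulrnBr.
have R6' : s 'X^6 = lie (s 'X^3) (s 'X^4).
  rewrite -Hlie; try exact: inX; congr (s _); rewrite (lieXX 2 3) /=.
  by rewrite -mulrnBr.
have U2 : uniq (parD 2) by rewrite P2.
have U3 : uniq (parD 3) by rewrite P3.
have U4 : uniq (parD 4) by rewrite P4.
have U5 : uniq (parD 5) by rewrite P5.
have h2 : (s 'X^2)@_[:: 1%N; 1%N] = 1.
  have := congr1 (fun p : {poly rat} => p`_2) (Haug _ (inX 2 isT)).
  rewrite (@aug_incl _ (parD 2)) //; last exact: sub.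
  rewrite P2 big_cons big_nil addr0 coefZ !coefXn /= mulr1 => ->.
  by [].
have h3 : (s 'X^3)@_[:: 1%N; 1%N; 1%N] + (s 'X^3)@_[:: 1%N; 2%N] + (s 'X^3)@_[:: 2%N; 1%N] = 1.
  have := congr1 (fun p : {poly rat} => p`_3) (Haug _ (inX 3 isT)).
  rewrite (@aug_incl _ (parD 3)) //; last exact: sub.
  by rewrite P3 !big_cons big_nil addr0 !coefD !coefZ !coefXn /= !mulr1 addrA.
have hs : (s 'X^3)@_[:: 2%N; 1%N] = (s 'X^3)@_[:: 1%N; 2%N].
  have := congr1 (mcoeff [:: 1%N; 2%N]) (Hplus _ (inX 3 isT)).2.
  rewrite (@iota_coef _ (parD 3)) //; last exact: sub.
    by rewrite P3 !big_cons big_nil /= => <-; rewrite !mulr0 mulr1 !add0r addr0.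
have E4 k : (s 'X^4)@_k = \sum_(c <- parD 2) \sum_(d <- parD 3) (s 'X^2)@_c * (s 'X^3)@_d * bc c d k.
  by rewrite R4 (lie_coef _ _ _ _ _ U2 U3) //; exact: sub.
have E5 k : (s 'X^5)@_k = 2^-1 * \sum_(c <- parD 2) \sum_(d <- parD 4) (s 'X^2)@_c * (s 'X^4)@_d * bc c d k.
  have := congr1 (mcoeff k) R5; rewrite mcoeffZ (lie_coef _ _ _ _ _ U2 U4); try exact: sub.
  by move=> <-; rewrite mulrA mulVf ?mul1r.
have := congr1 (mcoeff [:: 3%N; 3%N]) R6.
rewrite R6' mcoeffZ (lie_coef _ _ _ _ _ U3 U4) ?(lie_coef _ _ _ _ _ U2 U5); try exact: sub.
rewrite P2 P3 P4 P5 !big_cons !big_nil !E5 P2 P4 !big_cons !big_nil !E4 P2 P3 !big_cons !big_nil.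
rewrite h2 hs.
have -> : (s 'X^3)@_[:: 1%N; 1%N; 1%N] = 1 - 2 * (s 'X^3)@_[:: 1%N; 2%N].
  by move: h3; rewrite hs; lra.
rewrite /bc /=.
move=> H; move: H; clear; move=> H; lra.
Qed.
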